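(* Let $G$ be a graph with vertex order $v_1,\ldots,v_n$, let $D$ be a minimal dominating set of $G$, let $u,w\in D$ be adjacent, and let $v\in P_D(u)$. Let $X_{uv}$, $D'$, $D^*$ and $Z_{uv}$ be as defined in the context. Then $D^*$ is a minimal dominating set of $G$, $X_{uv}\cup\{v\}\subseteq D^*$, $|E(G[D^*])|<|E(G[D])|$, and $v$ is an isolated vertex of $G[D^*]$.
   Context: Graphs are finite, simple, undirected; $N(x)$ is the open and $N[x]=N(x)\cup\{x\}$ the closed neighborhood, $N[S]=\bigcup_{x\in S}N[x]$. A dominating set is $D\subseteq V(G)$ with $N[D]=V(G)$; it is minimal if no proper subset is dominating. For a dominating set $D$ and $x\in D$, a vertex $y$ is private for $x$ if $y\in N[x]\setminus N[D\setminus\{x\}]$; $P_D[x]$ is the set of such $y$ and $P_D(x)=P_D[x]\cap N(x)$. Fix an order $v_1,\ldots,v_n$ of $V(G)$. Greedy removal from a dominating set $D'$: while the current set $S$ is not a minimal dominating set, remove from $S$ the vertex $v_i$ of smallest index $i$ such that $S\setminus\{v_i\}$ is still dominating. Given $D,u,v$: $X_{uv}$ is built by starting from $\emptyset$ and repeatedly adding the smallest-index vertex of $P_D(u)\setminus N[\{v\}\cup X_{uv}]$ while this set is nonempty (so $X_{uv}$ is a maximal independent set of $G[P_D(u)\setminus N[v]]$). Let $D'=(D\setminus\{u\})\cup X_{uv}\cup\{v\}$ (a dominating set), let $D^*$ be the result of greedy removal from $D'$, and $Z_{uv}=D'\setminus D^*$. *)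

(* Defs.v *)
(* Vertices are 'I_n; the vertex order v_1,...,v_n is the
   natural order of 'I_n (index of v_{i+1} is i). A simple graph is a
   symmetric irreflexive relation e on 'I_n. *)
From mathcomp Require Import all_boot all_order.
Set Implicit Arguments. Unset Strict Implicit. Unset Printing Implicit Defensive.

Section Dom.
Variable n : nat.
Variable e : rel 'I_n.

Definition simple_graph := symmetric e /\ irreflexive e.

Definition Nopen (x : 'I_n) : {set 'I_n} := [set y | e x y].
Definition Nclosed (x : 'I_n) : {set 'I_n} := x |: Nopen x.
Definition NS (S : {set 'I_n}) : {set 'I_n} := \bigcup_(x in S) Nclosed x.

Definition dominating (D : {set 'I_n}) : bool := NS D == [set: 'I_n].
Definition minimal_dominating (D : {set 'I_n}) : bool :=
  dominating D && [forall S : {set 'I_n}, (S \proper D) ==> ~~ dominating S].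

Definition privC (D : {set 'I_n}) (x : 'I_n) : {set 'I_n} :=
  Nclosed x :\: NS (D :\ x).
Definition privO (D : {set 'I_n}) (x : 'I_n) : {set 'I_n} :=
  privC D x :&: Nopen x.

Definition removable (S : {set 'I_n}) (i : 'I_n) : bool :=
  (i \in S) && dominating (S :\ i).
Definition greedy_step (S : {set 'I_n}) : {set 'I_n} :=
  if minimal_dominating S then S else
  match [pick i | removable S i & [forall j, removable S j ==> (i <= j)]] with
  | Some i => S :\ i
  | None => S
  end.
(* the loop runs at most n times since each step removes a vertex *)
Definition greedy_removal (S : {set 'I_n}) : {set 'I_n} := iter n greedy_step S.

Definition Xcand (D : {set 'I_n}) (u v : 'I_n) (X : {set 'I_n}) : {set 'I_n} :=
  privO D u :\: NS (v |: X).
Definition X_step (D : {set 'I_n}) (u v : 'I_n) (X : {set 'I_n}) : {set 'I_n} :=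
  match [pick i | (i \in Xcand D u v X) &
                  [forall j, (j \in Xcand D u v X) ==> (i <= j)]] with
  | Some i => i |: X
  | None => X
  end.
Definition X_uv (D : {set 'I_n}) (u v : 'I_n) : {set 'I_n} :=
  iter n (X_step D u v) set0.

Definition D'_uv (D : {set 'I_n}) (u v : 'I_n) : {set 'I_n} :=
  ((D :\ u) :|: X_uv D u v) :|: [set v].
Definition Dstar_uv (D : {set 'I_n}) (u v : 'I_n) : {set 'I_n} :=
  greedy_removal (D'_uv D u v).
Definition Z_uv (D : {set 'I_n}) (u v : 'I_n) : {set 'I_n} :=
  D'_uv D u v :\: Dstar_uv D u v.

Definition induced_edges (S : {set 'I_n}) : nat :=
  #|[set p : 'I_n * 'I_n | [&& p.1 < p.2, e p.1 p.2, p.1 \in S & p.2 \in S]]|.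

Definition isolated_in (S : {set 'I_n}) (v : 'I_n) : bool :=
  (v \in S) && [forall y, (y \in S) ==> ~~ e v y].

End Dom.

(* Main.v *)
Require Import Defs.
From mathcomp Require Import all_boot all_order zify.
Set Implicit Arguments. Unset Strict Implicit. Unset Printing Implicit Defensive.

Lemma inNS n (e : rel 'I_n) (S : {set 'I_n}) y :
  reflect (exists2 x, x \in S & (y == x) || e x y) (y \in NS e S).
Proof.
apply: (iffP bigcupP) => [[x xS q]|[x xS H]]; exists x => //.
- by move: q; rewrite /Nclosed /Nopen !inE.
- by rewrite /Nclosed /Nopen !inE.
Qed.

Lemma domP n (e : rel 'I_n) (S : {set 'I_n}) : reflect (forall y, y \in NS e S) (dominating e S).
Proof.
apply: (iffP eqP) => [->|H]; first by move=> y; rewrite inE.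
by apply/setP => y; rewrite inE H.
Qed.

Lemma NS_sub n (e : rel 'I_n) (S T : {set 'I_n}) : S \subset T -> NS e S \subset NS e T.
Proof.
move=> ST; apply/subsetP => y /inNS [x xS H]; apply/inNS; exists x => //.
exact: (subsetP ST).
Qed.

Lemma dom_sub n (e : rel 'I_n) (S T : {set 'I_n}) : S \subset T -> dominating e S -> dominating e T.
Proof.
move=> ST /domP H; apply/domP => y; exact: (subsetP (NS_sub e ST)).
Qed.

Lemma greedy_sub n (e : rel 'I_n) (S : {set 'I_n}) : greedy_step e S \subset S.
Proof.
rewrite /greedy_step; case: ifP => // _; case: pickP => // i _; exact: subD1set.
Qed.

Lemma exists_removable n (e : rel 'I_n) (S : {set 'I_n}) :
  dominating e S -> ~~ minimal_dominating e S -> exists i, removable e S i.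
Proof.
move=> dS; rewrite /minimal_dominating dS /= negb_forall => /existsP [S' ].
rewrite negb_imply negbK => /andP [pS dS'].
have [x xS xS'] : exists2 x, x \in S & x \notin S'.
  move: pS; rewrite properE => /andP [_ /subsetPn [x ? ?]]; by exists x.
exists x; rewrite /removable xS /=; apply: dom_sub dS'.
apply/subsetP => y yS'; rewrite !inE (subsetP (proper_sub pS)) // andbT.
by apply/eqP => yx; rewrite -yx yS' in xS'.
Qed.

Lemma greedy_step_spec n (e : rel 'I_n) (S : {set 'I_n}) : dominating e S ->
  dominating e (greedy_step e S) /\
  (minimal_dominating e S /\ greedy_step e S = S \/ #|greedy_step e S|.+1 = #|S|).
Proof.
move=> dS; rewrite /greedy_step; case: ifP => [m|nm]; first by split => //; left.
have [i0 r0] := exists_removable dS (negbT nm).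
case: pickP => [i /andP [/andP [iS di] _]|none].
  split => //; right; by rewrite (cardsD1 i S) iS.
case: (arg_minnP (fun i : 'I_n => val i) r0) => i ri imin.
move: (none i); rewrite ri /=; move/negbT/negP; case.
by apply/forallP => j; apply/implyP => rj; exact: imin.
Qed.

Lemma greedy_iter n (e : rel 'I_n) (S : {set 'I_n}) k : dominating e S ->
  dominating e (iter k (greedy_step e) S) /\
  (minimal_dominating e (iter k (greedy_step e) S) \/ #|iter k (greedy_step e) S| + k <= #|S|).
Proof.
move=> dS; elim: k => [|k [dk H]] /=; first by split => //; right; rewrite addn0.
have [d1 [[m ->]|c]] := greedy_step_spec dk; split => //; first by left.
case: H => [m|le]; first by left; move: c; rewrite /greedy_step m => /eqP; rewrite eqn_leq ltnn.
right; move: c le; simpl; set a := #|_|; set b := #|_|; lia.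
Qed.

Lemma greedy_min n (e : rel 'I_n) (S : {set 'I_n}) (u : 'I_n) : dominating e S ->
  minimal_dominating e (greedy_removal e S).
Proof.
move=> dS; have [d [//|c]] := greedy_iter n dS.
have : #|greedy_removal e S| = 0.
  have := max_card S; rewrite card_ord => mc; move: c mc.
  set a := #|greedy_removal e S|; set b := #|S|; lia.
move/eqP; rewrite cards_eq0 => /eqP E.
move/domP: d => /(_ u); rewrite -/(greedy_removal e S) E.
by move/inNS => [x]; rewrite inE.
Qed.

Lemma mem_NS n (e : rel 'I_n) (S : {set 'I_n}) x : x \in S -> x \in NS e S.
Proof. by move=> xS; apply/inNS; exists x; rewrite ?eqxx. Qed.

Lemma protect_step n (e : rel 'I_n) (S T P : {set 'I_n}) :
  S \subset T -> P \subset S -> (forall x y, x \in P -> y \in T -> ~~ e y x) ->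
  P \subset greedy_step e S.
Proof.
move=> ST PS HP; rewrite /greedy_step; case: ifP => // _.
case: pickP => // i /andP [/andP [iS /domP di] _].
apply/subsetP => x xP; rewrite !inE (subsetP PS) // andbT.
apply/eqP => xi; subst x; move: (di i) => /inNS [y]; rewrite !inE => /andP [yi yS].
rewrite eq_sym (negbTE yi) /= => eyi.
by move: (HP _ _ xP (subsetP ST _ yS)); rewrite eyi.
Qed.

Lemma protect_iter n (e : rel 'I_n) (S P : {set 'I_n}) k :
  P \subset S -> (forall x y, x \in P -> y \in S -> ~~ e y x) ->
  P \subset iter k (greedy_step e) S /\ iter k (greedy_step e) S \subset S.
Proof.
move=> PS HP; elim: k => [|k [H1 H2]] /=; first by split.
split; first exact: (protect_step H2 H1 HP).
exact: subset_trans (greedy_sub _ _) H2.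
Qed.

Definition Xinv n (e : rel 'I_n) D u v (X : {set 'I_n}) :=
  forall x, x \in X -> [/\ x \in privO e D u, x != v, ~~ e v x & forall y, y \in X -> ~~ e y x].

Lemma Xcand_notin n (e : rel 'I_n) D u v (X : {set 'I_n}) i :
  i \in Xcand e D u v X -> [/\ i \in privO e D u, i \notin X, i != v, ~~ e v i &
     forall y, y \in X -> ~~ e y i].
Proof.
rewrite /Xcand inE => /andP [nN iP]; split => //.
- by apply: contra nN => iX; apply: mem_NS; rewrite inE iX orbT.
- by apply: contra nN => /eqP ->; apply: mem_NS; rewrite !inE eqxx.
- by apply: contra nN => evi; apply/inNS; exists v; rewrite ?inE ?eqxx ?evi ?orbT.
- move=> y yX; apply: contra nN => eyi; apply/inNS; exists y; rewrite ?inE ?yX ?eyi ?orbT //.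
Qed.

Lemma Xstep_inv n (e : rel 'I_n) D u v (X : {set 'I_n}) :
  symmetric e -> irreflexive e -> Xinv e D u v X -> Xinv e D u v (X_step e D u v X).
Proof.
move=> sym irr HX; rewrite /X_step; case: pickP => // i /andP [ic _].
have [iP iX iv evi Hi] := Xcand_notin ic.
move=> x; rewrite in_setU1 => /orP [/eqP ->|xX].
  split => // y; rewrite in_setU1 => /orP [/eqP ->|yX]; [by rewrite irr | exact: Hi].
have [xP xv evx Hx] := HX x xX; split => // y; rewrite in_setU1 => /orP [/eqP ->|yX].
  by rewrite sym; apply: Hi.
exact: Hx.
Qed.

Lemma Xiter_inv n (e : rel 'I_n) D u v k :
  symmetric e -> irreflexive e -> Xinv e D u v (iter k (X_step e D u v) set0).
Proof.
move=> sym irr; elim: k => [|k IH] /=; first by move=> x; rewrite inE.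
exact: Xstep_inv.
Qed.

Lemma Xiter_max n (e : rel 'I_n) D u v k :
  Xcand e D u v (iter k (X_step e D u v) set0) = set0 \/ k <= #|iter k (X_step e D u v) set0|.
Proof.
elim: k => [|k IH] /=; first by right.
set X := iter k _ _.
rewrite {1 2}/X_step; case: pickP => [i /andP [ic _]|none].
  have [_ iX _ _ _] := Xcand_notin ic.
  right; rewrite cardsU1 iX /= add1n ltnS.
  by case: IH => // E; move: ic; rewrite E inE.
left; apply/setP => i; rewrite in_set0; apply/negbTE/negP => ic.
case: (arg_minnP (fun i : 'I_n => val i) ic) => j jc jmin.
have jc2 : j \in Xcand e D u v X := jc.
move: (none j); rewrite jc2 /=; move/negbT/negP; case.
by apply/forallP => l; apply/implyP => lc; exact: (jmin l lc).
Qed.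

Lemma X_max n (e : rel 'I_n) D u v : Xcand e D u v (X_uv e D u v) = set0.
Proof.
have [//|le] := Xiter_max e D u v n.
apply/setP => i; rewrite in_set0; apply/negbTE/negP => ic.
have [_ iX _ _ _] := Xcand_notin ic.
have : X_uv e D u v \proper [set: 'I_n].
  rewrite properT; apply/eqP => E; by rewrite E inE in iX.
move/proper_card; rewrite cardsT card_ord ltnNge.
by rewrite /X_uv le.
Qed.

Lemma priv_nadj n (e : rel 'I_n) D u x y :
  x \in privO e D u -> y \in D :\ u -> (x != y) && ~~ e y x.
Proof.
move=> H yD; move: H; rewrite /privO /privC !inE => /andP [/andP [nN _] _].
apply/andP; split.
- by apply: contra nN => /eqP ->; apply: mem_NS.
- by apply: contra nN => eyx; apply/inNS; exists y; rewrite ?eyx ?orbT.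
Qed.

Definition Eset n (e : rel 'I_n) (S : {set 'I_n}) :=
  [set p : 'I_n * 'I_n | [&& p.1 < p.2, e p.1 p.2, p.1 \in S & p.2 \in S]].

Theorem lemma1 (n : nat) (e : rel 'I_n) (D : {set 'I_n}) (u w v : 'I_n) :
  simple_graph e ->
  minimal_dominating e D ->
  u \in D -> w \in D -> e u w ->
  v \in privO e D u ->
  [/\ minimal_dominating e (Dstar_uv e D u v),
      X_uv e D u v :|: [set v] \subset Dstar_uv e D u v,
      induced_edges e (Dstar_uv e D u v) < induced_edges e D
    & isolated_in e (Dstar_uv e D u v) v].
Proof.
move=> [sym irr] /andP [dD _] uD wD euw vP.
have HX : Xinv e D u v (X_uv e D u v) := @Xiter_inv n e D u v n sym irr.
have Xm := @X_max n e D u v.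
rewrite /Dstar_uv.
set X := X_uv e D u v in HX Xm *.
set D' := D'_uv e D u v.
set P := X :|: [set v].
have wu : w \in D :\ u by rewrite !inE wD andbT; apply/eqP => wu; subst w; rewrite irr in euw.
have HP : forall x y, x \in P -> y \in D' -> ~~ e y x.
  move=> x y; rewrite /P /D' /D'_uv !inE => /orP [xX|/eqP ->].
    have [xP xv evx Hx] := HX x xX.
    case/orP => [/orP [yD|yX]|/eqP ->] //.
    - have yD' : y \in D :\ u by rewrite in_setD1.
      by case/andP: (priv_nadj xP yD').
    - exact: Hx.
  case/orP => [/orP [yD|yX]|/eqP ->].
  - have yD' : y \in D :\ u by rewrite in_setD1.
    by case/andP: (priv_nadj vP yD').
  - have [_ _ evy _] := HX y yX; by rewrite sym.
  - by rewrite irr.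
have PD' : P \subset D'.
  by apply/subsetP => x; rewrite /P /D' /D'_uv !inE => /orP [->|->]; rewrite ?orbT.
have notP : forall y, y \in D' -> y \notin P -> y \in D :\ u.
  move=> y; rewrite /P /D' /D'_uv !inE => /orP [/orP [yD|->]|->] //; by rewrite orbT.
have dD' : dominating e D'.
  apply/domP => y; move/domP: dD => /(_ y) /inNS [x xD Hx].
  have [yN|yN] := boolP (y \in NS e (D :\ u)).
    apply: (subsetP (NS_sub e _)) yN.
    by apply/subsetP => z zD; rewrite /D' /D'_uv !in_setU zD.
  have xu : x = u.
    apply/eqP; apply: contraNT yN => xu; apply/inNS; exists x => //; by rewrite !inE xu.
  subst x.
  have yu : y != u.
    apply: contra yN => /eqP ->; apply/inNS; exists w => //; by rewrite sym euw orbT.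
  have yP : y \in privO e D u.
    rewrite /privO /privC /Nclosed /Nopen !inE yN /=; move: Hx; rewrite (negbTE yu).
    by move=> /= ->.
  have : y \in NS e (v |: X).
    apply: contraT => yn; have : y \in Xcand e D u v X by rewrite /Xcand inE yn yP.
    by rewrite Xm inE.
  apply: (subsetP (NS_sub e _)).
  by apply/subsetP => z; rewrite /D' /D'_uv !inE => /orP [->|->]; rewrite ?orbT.
have [PS' SD''] := @protect_iter n e D' P n PD' HP.
set S := iter n (greedy_step e) D' in PS' SD''.
have vS : v \in S by apply: (subsetP PS'); rewrite /P !inE eqxx orbT.
split.
- exact: (greedy_min u dD').
- exact: PS'.
- rewrite /induced_edges.
  apply: (@leq_trans #|Eset e (D :\ u)|.+1).
    rewrite ltnS; apply: subset_leq_card; apply/subsetP => p; rewrite /Eset !in_set.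
    case/and4P => -> ep p1 p2; rewrite ep /=.
    have q1 := subsetP SD'' _ p1; have q2 := subsetP SD'' _ p2.
    have r1 : p.1 \in D :\ u.
      apply: notP => //; apply/negP => p1P; move: (HP _ _ p1P q2); by rewrite sym ep.
    have r2 : p.2 \in D :\ u.
      apply: notP => //; apply/negP => p2P; move: (HP _ _ p2P q1); by rewrite ep.
    by move: r1 r2; rewrite !inE => -> ->.
  apply: proper_card; apply/properP; split.
    apply/subsetP => p; rewrite !inE; case/and4P => -> -> /andP [_ ->] /andP [_ ->] //.
  have uw : u != w by apply: contraTneq wu => ->; rewrite !inE eqxx.
  case: (ltngtP u w) => [lt|lt|/val_inj E]; last by rewrite E eqxx in uw.
  + exists (u, w); first by rewrite !inE /= lt euw uD wD.
    by rewrite /Eset in_set /= in_setD1 eqxx /= !andbF.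
  + exists (w, u); first by rewrite !inE /= lt sym euw uD wD.
    by rewrite /Eset in_set /= (in_setD1 u) eqxx /= !andbF.
- rewrite /isolated_in vS /=; apply/forallP => y; apply/implyP => yS.
  rewrite sym; apply: HP; [by rewrite /P !inE eqxx orbT | exact: subsetP SD'' _ yS].
Qed.
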